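(* Let $q$ be a prime power and $k,\delta,\alpha$ positive integers with $\alpha\ge2$, $\delta\le(\alpha-1)k$ and $(\alpha-1)\mid(\delta-1)$. Then, with $q,k,\delta,\alpha$ fixed and $n\to\infty$, $$B_q(n,k,\delta;\alpha)=\Theta\!\left(q^{\left(k-\frac{\delta-1}{\alpha-1}\right)n}\right).$$
   Context: For a prime power $q$, $\mathcal{G}_q(n,k)$ denotes the set of all $k$-dimensional subspaces of $\mathbb{F}_q^n$. An $\alpha$-$(n,k,\delta)_q^c$ covering Grassmannian code is a subset $\mathcal{C}\subseteq\mathcal{G}_q(n,k)$ (no repeated codewords) such that every set of $\alpha$ distinct codewords of $\mathcal{C}$ spans a subspace of $\mathbb{F}_q^n$ of dimension at least $k+\delta$. $B_q(n,k,\delta;\alpha)$ denotes the maximum size of an $\alpha$-$(n,k,\delta)_q^c$ code. The implied constants in $\Theta(\cdot)$ may depend on $q,k,\delta,\alpha$ but not on $n$. *)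

(* Defs.v *)
From HB Require Import structures.
From mathcomp Require Import all_boot all_order all_algebra all_field.
Set Implicit Arguments. Unset Strict Implicit. Unset Printing Implicit Defensive.
Import GRing.Theory.

Import VectorInternalTheory.
Section FinVspace.
Variables (F : finFieldType) (vT : vectType F).
HB.instance Definition _ := [Countable of @space F vT by <:].
HB.instance Definition _ := [Finite of @space F vT by <:].
End FinVspace.

Definition grassmannian (F : finFieldType) (n k : nat) : {set {vspace 'rV[F]_n}} :=
  [set U : {vspace 'rV[F]_n} | \dim U == k].

Definition covering_code (F : finFieldType) (n k delta alpha : nat)
    (C : {set {vspace 'rV[F]_n}}) : bool :=
  (C \subset grassmannian F n k) &&
  [forall S : {set {vspace 'rV[F]_n}},
     ((S \subset C) && (#|S| == alpha)) ==> (k + delta <= \dim (\sum_(U in S) U)%VS)].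

Definition Bq (F : finFieldType) (n k delta alpha : nat) : nat :=
  \max_(C : {set {vspace 'rV[F]_n}} | covering_code k delta alpha C) #|C|.

(* Main.v *)
Require Import Defs.
From mathcomp Require Import all_boot all_order all_algebra all_field.
From mathcomp Require Import zify ring.
Set Implicit Arguments. Unset Strict Implicit. Unset Printing Implicit Defensive.
Import GRing.Theory.

Lemma card_bigcup_leq (I T : finType) (P : pred I) (F : I -> {set T}) :
  #|\bigcup_(i | P i) F i| <= \sum_(i | P i) #|F i|.
Proof.
elim/big_rec2: _ => [|i U n _ h]; first by rewrite cards0.
apply: leq_trans (leq_card_setU _ _).1 _; by rewrite leq_add2l.
Qed.

Lemma supsets_count (T : finType) (P S : {set T}) (a s : nat) :
  S \subset P -> #|S| = a ->
  #|[set Y : {set T} | [&& Y \subset P, #|Y| == s & S \subset Y]]| <= 'C(#|P| - a, s - a).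
Proof.
move=> SP cS.
set Z := [set Z : {set T} | Z \subset P :\: S & #|Z| == s - a].
have -> : 'C(#|P| - a, s - a) = #|Z|.
  rewrite cards_draws cardsD (setIidPr SP) cS //.
apply: leq_trans (leq_imset_card (fun Z => Z :|: S) Z).
apply: subset_leq_card; apply/subsetP => Y; rewrite inE => /and3P [YP /eqP cY SY].
apply/imsetP; exists (Y :\: S); last by apply/setP => x; rewrite !inE; case: (boolP (x \in S)) => hx; rewrite ?(subsetP SY x hx) ?orbT ?orbF ?andTb //.
rewrite inE setSD //= cardsD (setIidPr SY) cY cS //.
Qed.

Lemma alteration (T : finType) (P : {set T}) (Bad : {set {set T}}) (a s : nat) :
  0 < a -> s <= #|P| ->
  (forall S, S \in Bad -> S \subset P /\ #|S| = a) ->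
  exists X : {set T}, [/\ X \subset P, (forall S, S \in Bad -> ~~ (S \subset X)) &
     'C(#|P|, s) * (s - #|X|) <= #|Bad| * 'C(#|P| - a, s - a)].
Proof.
move=> a0 sP hB.
pose Ys := [set Y : {set T} | (Y \subset P) && (#|Y| == s)].
have cYs : #|Ys| = 'C(#|P|, s) by rewrite cards_draws.
pose bad (Y : {set T}) := #|[set S in Bad | S \subset Y]|.
have tot : \sum_(Y in Ys) bad Y <= #|Bad| * 'C(#|P| - a, s - a).
  rewrite /bad.
  under eq_bigr => Y _ do rewrite -sum1dep_card.
  rewrite (exchange_big_dep (fun S => S \in Bad)) /=; last by move=> Y S _ /andP[].
  rewrite -sum_nat_const; apply: leq_sum => S SB.
  have [SP cS] := hB S SB.
  apply: leq_trans (supsets_count s SP cS).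
  rewrite sum1dep_card; apply: subset_leq_card; apply/subsetP => Y.
  by rewrite !inE => /andP [/andP [-> ->] /andP [_ ->]].
have [Y0 Y0in] : exists Y0, Y0 \in Ys.
  have : 0 < #|Ys| by rewrite cYs bin_gt0.
  by rewrite card_gt0 => /set0Pn.
pose Y := [arg min_(Y < Y0 in Ys) bad Y].
have [YY Ymin] : Y \in Ys /\ forall Y', Y' \in Ys -> bad Y <= bad Y'.
  by rewrite /Y; case: arg_minnP.
have hbY : 'C(#|P|, s) * bad Y <= #|Bad| * 'C(#|P| - a, s - a).
  apply: leq_trans tot; rewrite -cYs -sum_nat_const; exact: leq_sum.
pose BY := [set S in Bad | S \subset Y].
pose R := \bigcup_(S in BY) (if [pick z in S] is Some z then [set z] else set0).
have cR : #|R| <= bad Y.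
  apply: leq_trans (card_bigcup_leq _ _) _.
  rewrite /bad -sum1_card; apply: leq_sum => S _.
  by case: pickP => [z _|_]; rewrite ?cards1 ?cards0.
exists (Y :\: R); split.
- by apply: subset_trans (subsetDl _ _) _; move: YY; rewrite inE => /andP [].
- move=> S SB; apply/negP => SX.
  have SY : S \subset Y by apply: subset_trans SX (subsetDl _ _).
  have : 0 < #|S| by have [_ ->] := hB S SB.
  rewrite card_gt0 => /set0Pn [x xS].
  case hp: [pick z in S] => [z|]; last first.
    by move: hp; case: pickP => [? ? //|/(_ x)]; rewrite xS.
  have zS : z \in S by move: hp; case: pickP => [z' hz' [<-]|//].
  have zR : z \in R.
    by apply/bigcupP; exists S; [rewrite inE SB SY | rewrite hp inE].
  by have := subsetP SX z zS; rewrite inE zR.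
- apply: leq_trans hbY; rewrite leq_mul2l; apply/orP; right.
  move: YY; rewrite inE => /andP [_ /eqP cY].
  rewrite cardsD cY.
  have : #|Y :&: R| <= #|R| by apply: subset_leq_card; apply: subsetIr.
  lia.
Qed.

Lemma bin_ratio N s a : a <= s -> s <= N -> 'C(N - a, s - a) * N ^ a <= 'C(N, s) * s ^ a.
Proof.
move=> hs hN; elim: a hs => [|a IH] hs; first by rewrite !subn0 !expn0.
have IH' := IH (ltnW hs).
have hd := mul_bin_diag (N - a) (s - a.+1).
have e1 : (s - a.+1).+1 = s - a by lia.
have e2 : (N - a).-1 = N - a.+1 by lia.
rewrite e1 e2 in hd.
have hpos : 0 < N - a by lia.
rewrite -(leq_pmul2l hpos).
have -> : (N - a) * ('C(N - a.+1, s - a.+1) * N ^ a.+1) = (s - a) * ('C(N - a, s - a) * N ^ a) * N.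
  by rewrite expnS mulnA hd; lia.
apply: leq_trans (_ : (s - a) * ('C(N, s) * s ^ a) * N <= _).
  by rewrite leq_mul2r leq_mul2l IH' !orbT.
have h3 : (s - a) * N <= (N - a) * s by nia.
rewrite expnS.
have -> : (s - a) * ('C(N, s) * s ^ a) * N = ((s - a) * N) * ('C(N, s) * s ^ a) by lia.
have -> : (N - a) * ('C(N, s) * (s * s ^ a)) = ((N - a) * s) * ('C(N, s) * s ^ a) by lia.
by rewrite leq_mul2r h3 orbT.
Qed.

Local Open Scope ring_scope.

Section Pad.
Variables (F : finFieldType).

Lemma span_pad (vT : vectType F) (U : {vspace vT}) (d : nat) :
  (\dim U <= d)%N -> <<[seq nth (0%R : vT) (vbasis U) j | j <- iota 0 d]>>%VS = U.
Proof.
move=> hd; apply/eqP; rewrite eqEsubv; apply/andP; split.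
  apply/span_subvP => x /mapP [j _ ->].
  have [hj|hj] := ltnP j (size (vbasis U)).
    by apply: vbasis_mem; apply: mem_nth.
  by rewrite nth_default ?mem0v.
rewrite -{1}(span_basis (vbasisP U)); apply: sub_span => x hx.
have := hx; rewrite -index_mem => hi.
apply/mapP; exists (index x (vbasis U)); last by rewrite nth_index.
rewrite mem_iota /= add0n; apply: leq_trans hi _; by rewrite size_tuple.
Qed.

Lemma card_dimle (vT : vectType F) (d : nat) (W0 : {vspace vT}) (A : {set {vspace vT}}) (T : finType)
  (g : vT -> T) : {in W0 &, injective g} ->
  (forall W, W \in A -> (\dim W <= d)%N /\ (W <= W0)%VS) -> (#|A| <= #|T| ^ d)%N.
Proof.
move=> ginj hA.
pose f (W : {vspace vT}) := [ffun j : 'I_d => g (nth 0 (vbasis W) j)].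
have finj : {in A &, injective f}.
  move=> W1 W2 h1 h2 e.
  have [d1 s1] := hA _ h1; have [d2 s2] := hA _ h2.
  rewrite -(span_pad d1) -(span_pad d2).
  congr (span _); apply/eq_in_map => j; rewrite mem_iota /= add0n => hj.
  have := congr1 (fun h : {ffun 'I_d -> T} => h (Ordinal hj)) e; rewrite /f !ffunE.
  have inW (W : {vspace vT}) : (W <= W0)%VS -> nth 0 (vbasis W) j \in W0.
    move=> sW; have [hj'|hj'] := ltnP j (size (vbasis W)).
      by apply: (subvP sW); apply: vbasis_mem; apply: mem_nth.
    by rewrite nth_default ?mem0v.
  exact: ginj (inW _ s1) (inW _ s2).
rewrite -(card_in_imset finj); apply: leq_trans (max_card _) _; by rewrite card_ffun card_ord.
Qed.

Lemma card_subsp (vT : vectType F) (d : nat) (W0 : {vspace vT}) (A : {set {vspace vT}}) :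
  (forall W, W \in A -> (\dim W <= d)%N /\ (W <= W0)%VS) ->
  (#|A| <= #|F| ^ (\dim W0 * d))%N.
Proof.
move=> hA.
pose g (v : vT) := [ffun i : 'I_(\dim W0) => coord (vbasis W0) i v].
have ginj : {in W0 &, injective g}.
  move=> v w hv hw e; rewrite (coord_vbasis hv) (coord_vbasis hw).
  apply: eq_bigr => i _; congr (_ *: _).
  by have := congr1 (fun h : {ffun 'I_(\dim W0) -> F} => h i) e; rewrite /g !ffunE.
apply: leq_trans (card_dimle ginj hA) _.
by rewrite card_ffun card_ord -expnM.
Qed.
End Pad.

Section DimB.
Variables (F : finFieldType) (vT : vectType F).

Lemma dim_common (T : {vspace vT}) (k : nat) (s : seq {vspace vT}) :
  (forall U, U \in s -> (T <= U)%VS /\ \dim U = k) ->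
  (\dim (T + \sum_(U <- s) U)%VS <= \dim T + size s * (k - \dim T))%N.
Proof.
elim: s => [|U s IH] hs.
  by rewrite big_nil addv0 addn0.
rewrite big_cons /=.
have [hTU hdU] := hs U (mem_head _ _).
have IH' := IH (fun V hV => hs V (mem_behead (s:=U::s) hV)).
set Y := (T + \sum_(j <- s) j)%VS in IH'.
have -> : (T + (U + \sum_(j <- s) j) = U + Y)%VS by rewrite /Y addvA (addvC T) addvA.
have hc := dimv_sum_cap U Y.
have hTc : (\dim T <= \dim (U :&: Y))%N.
  by apply: dimvS; rewrite subv_cap hTU addvSl.
have hTk : (\dim T <= k)%N by rewrite -hdU dimvS.
rewrite mulSn; lia.
Qed.

Lemma dim_common_set (T : {vspace vT}) (k : nat) (S : {set {vspace vT}}) :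
  (forall U, U \in S -> (T <= U)%VS /\ \dim U = k) ->
  (\dim (\sum_(U in S) U)%VS <= \dim T + #|S| * (k - \dim T))%N.
Proof.
move=> hS.
have := @dim_common T k (enum S).
rewrite -cardE big_enum => H.
apply: leq_trans (H _); first by apply: dimvS; apply: addvSr.
by move=> U; rewrite mem_enum; apply: hS.
Qed.
End DimB.

Section Lift.
Variables (F : finFieldType) (k n' : nat).

Definition rvec (B : {ffun 'I_k * 'I_n' -> F}) (i : 'I_k) : 'rV[F]_(k + n') :=
  row_mx (delta_mx 0 i) (\row_j B (i, j)).

Definition Xt B : k.-tuple 'rV[F]_(k + n') := [tuple rvec B i | i < k].

Lemma Xt_nth B (i : 'I_k) : (Xt B)`_i = rvec B i.
Proof. by rewrite nth_mktuple. Qed.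

Lemma splitL (l : 'I_k) : split (lshift n' l) = inl l.
Proof. exact: (unsplitK (inl _ l)). Qed.
Lemma splitR (j : 'I_n') : split (rshift k j) = inr j.
Proof. exact: (unsplitK (inr _ j)). Qed.

Lemma comb_l B (c : 'I_k -> F) l :
  (\sum_(i < k) c i *: (Xt B)`_i) 0 (lshift n' l) = c l.
Proof.
rewrite summxE (bigD1 l) //= big1 ?addr0.
  by rewrite Xt_nth !mxE splitL /= mxE !eqxx mulr1.
move=> i hi; by rewrite Xt_nth !mxE splitL /= mxE eqxx /= eq_sym (negbTE hi) mulr0.
Qed.

Lemma comb_r B (c : 'I_k -> F) j :
  (\sum_(i < k) c i *: (Xt B)`_i) 0 (rshift k j) = \sum_(i < k) c i * B (i, j).
Proof.
rewrite summxE; apply: eq_bigr => i _.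
by rewrite Xt_nth !mxE splitR /= mxE.
Qed.

Lemma Xt_free B : free (Xt B).
Proof.
apply/freeP => c hc i.
have := comb_l B c i; rewrite hc mxE //.
Qed.

Lemma Xt_dim B : \dim <<Xt B>>%VS = k.
Proof. by have /eqP -> := Xt_free B; rewrite size_tuple. Qed.

Lemma Xt_inj B1 B2 : <<Xt B1>>%VS = <<Xt B2>>%VS -> B1 = B2.
Proof.
move=> e; apply/ffunP => -[i j].
have hv : (Xt B1)`_i \in <<Xt B2>>%VS.
  by rewrite -e; apply: memv_span; apply: mem_nth; rewrite size_tuple.
have hs := coord_span hv.
have hl : forall l, coord (Xt B2) l ((Xt B1)`_i) = (l == i)%:R.
  move=> l; have := congr1 (fun M : 'rV_(k + n') => M 0 (lshift n' l)) hs.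
  rewrite /= comb_l Xt_nth !mxE splitL /= mxE eqxx /= eq_sym => <- //.
have := congr1 (fun M : 'rV_(k + n') => M 0 (rshift k j)) hs.
rewrite /= comb_r Xt_nth !mxE splitR /= mxE => ->.
rewrite (bigD1 i) //= big1 ?addr0; first by rewrite -Xt_nth hl eqxx mul1r.
by move=> l hli; rewrite -Xt_nth hl (negbTE hli) mul0r.
Qed.

Lemma card_grass_lb : (#|F| ^ (k * n') <= #|grassmannian F (k + n') k|)%N.
Proof.
pose f B := <<Xt B>>%VS.
have finj : injective f by move=> B1 B2; apply: Xt_inj.
have : (#|[set f B | B : {ffun 'I_k * 'I_n' -> F}]| = #|F| ^ (k * n'))%N.
  by rewrite card_imset // card_ffun card_prod !card_ord.
move=> <-; apply: subset_leq_card; apply/subsetP => U /imsetP [B _ ->].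
by rewrite inE Xt_dim.
Qed.
End Lift.

Local Close Scope ring_scope.

Section Upper.
Variables (F : finFieldType).

Lemma dim_full n : \dim (fullv : {vspace 'rV[F]_n}) = n.
Proof. rewrite dimvf dim_matrix; exact: mul1n. Qed.

Lemma take_sub n e (U : {vspace 'rV[F]_n}) : e <= \dim U ->
  \dim <<take e (vbasis U)>>%VS = e /\ (<<take e (vbasis U)>> <= U)%VS.
Proof.
move=> he; split.
  have hf : free (take e (vbasis U)).
    apply: (@catl_free _ _ (drop e (vbasis U))).
    by rewrite cat_take_drop; apply: basis_free (vbasisP U).
  by rewrite (eqP hf) size_take size_tuple; case: ltngtP he.
apply/span_subvP => x hx; apply: vbasis_mem; exact: mem_take hx.
Qed.

Lemma exists_subset (T : finType) (A : {set T}) a : a <= #|A| ->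
  exists S : {set T}, S \subset A /\ #|S| = a.
Proof.
move=> h.
have : 0 < #|[set S : {set T} | S \subset A & #|S| == a]| by rewrite cards_draws bin_gt0.
rewrite card_gt0 => /set0Pn [S]; rewrite inE => /andP [SA /eqP cS].
by exists S.
Qed.

Lemma upper_code n k delta alpha m e a1 (C : {set {vspace 'rV[F]_n}}) :
  alpha = a1.+1 -> delta = m * a1 + 1 -> k = m + e ->
  covering_code k delta alpha C -> #|C| <= a1 * #|F| ^ (n * e).
Proof.
move=> ha hd hk /andP [CG /forallP HC].
pose tau (U : {vspace 'rV[F]_n}) := <<take e (vbasis U)>>%VS.
pose Ws := [set W : {vspace 'rV[F]_n} | \dim W <= e].
have cWs : #|Ws| <= #|F| ^ (n * e).
  have := @card_subsp F _ e fullv Ws; rewrite dim_full; apply.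
  by move=> W; rewrite inE => ->; split => //; apply: subvf.
have dimC U : U \in C -> \dim U = k.
  by move=> UC; have := subsetP CG U UC; rewrite inE => /eqP.
have tauP U : U \in C -> \dim (tau U) = e /\ (tau U <= U)%VS.
  by move=> UC; apply: take_sub; rewrite dimC // hk leq_addl.
rewrite -sum1_card (partition_big tau (fun W => W \in Ws)); last first.
  by move=> U UC; rewrite inE (tauP U UC).1.
have h1 : \sum_(W in Ws) a1 <= a1 * #|F| ^ (n * e).
  by rewrite sum_nat_const mulnC leq_mul2l cWs orbT.
apply: leq_trans h1; apply: leq_sum => W _.
rewrite -[X in X <= _]/(\sum_(i | (i \in C) && (tau i == W)) 1)%N. rewrite sum1dep_card.
rewrite leqNgt; apply/negP => big.
have hb : alpha <= #|[set x in C | tau x == W]| by rewrite ha.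
have [S [SA cS]] := exists_subset hb.
have := HC S; rewrite cS eqxx andbT.
have SC : S \subset C.
  by apply: subset_trans SA _; apply/subsetP => U; rewrite inE => /andP [].
rewrite SC /= => hdim.
have := @dim_common_set _ _ W k S.
have hW : forall U, U \in S -> (W <= U)%VS /\ \dim U = k.
  move=> U US; have := subsetP SA U US; rewrite inE => /andP [UC /eqP <-].
  by split; [exact: (tauP U UC).2 | exact: dimC].
move/(_ hW).
have dW : \dim W = e.
  have [U US] : exists U, U \in S.
    by apply/set0Pn; rewrite -card_gt0 cS ha.
  have := subsetP SA U US; rewrite inE => /andP [UC /eqP <-].
  exact: (tauP U UC).1.
rewrite dW cS => h2; have := leq_trans hdim h2.
rewrite ha hd hk; nia.
Qed.
End Upper.

Section Lower.
Variables (F : finFieldType).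

Definition BadS n k delta alpha : {set {set {vspace 'rV[F]_n}}} :=
  [set S : {set {vspace 'rV[F]_n}} | [&& S \subset grassmannian F n k, #|S| == alpha
     & \dim (\sum_(U in S) U)%VS < k + delta]].

Lemma card_bad n k delta alpha K : k + delta = K.+1 ->
  #|BadS n k delta alpha| <= #|F| ^ (n * K) * 2 ^ (#|F| ^ (K * k)).
Proof.
move=> hK.
set G := grassmannian F n k.
pose WK := [set W : {vspace 'rV[F]_n} | \dim W <= K].
pose fib (W : {vspace 'rV[F]_n}) := [set U in G | (U <= W)%VS].
have q0 : 0 < #|F| by apply: ltnW; apply: card_finNzRing_gt1.
have cWK : #|WK| <= #|F| ^ (n * K).
  have := @card_subsp F _ K fullv WK; rewrite dim_full; apply.
  by move=> W; rewrite inE => ->; split => //; apply: subvf.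
have cfib W : W \in WK -> #|fib W| <= #|F| ^ (K * k).
  rewrite inE => hW.
  apply: leq_trans (_ : #|F| ^ (\dim W * k) <= _); last first.
    by apply: leq_pexp2l => //; rewrite leq_mul2r hW orbT.
  apply: card_subsp => U; rewrite inE => /andP [UG UW]; split => //.
  by move: UG; rewrite inE => /eqP ->.
have sub : BadS n k delta alpha \subset \bigcup_(W in WK) powerset (fib W).
  apply/subsetP => S; rewrite inE => /and3P [SG _ hd].
  apply/bigcupP; exists (\sum_(U in S) U)%VS.
    by rewrite inE -ltnS -hK.
  rewrite powersetE; apply/subsetP => U US; rewrite inE (subsetP SG U US) /=.
  exact: (sumv_sup U).
apply: leq_trans (subset_leq_card sub) _.
apply: leq_trans (card_bigcup_leq _ _) _.
apply: leq_trans (_ : \sum_(W in WK) 2 ^ (#|F| ^ (K * k)) <= _).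
  apply: leq_sum => W hW; rewrite card_powerset.
  by apply: leq_pexp2l => //; apply: cfib.
by rewrite sum_nat_const leq_mul2r cWK orbT.
Qed.
End Lower.

Section Lower2.
Variables (F : finFieldType).

Lemma lower_code n k delta alpha m e a1 :
  alpha = a1.+1 -> 0 < a1 -> delta = m * a1 + 1 -> k = m + e -> 0 < e ->
  k + (alpha*k*k + 2 * 2 ^ (#|F| ^ ((m+e+m*a1) * k))) + alpha <= n ->
  #|F| ^ (e * n) <= 2 * #|F| ^ (alpha*k*k + 2 * 2 ^ (#|F| ^ ((m+e+m*a1) * k))) * Bq F n k delta alpha.
Proof.
move=> ha a1p hd hk ep hn.
have [n' en] : exists n', n = k + n' by exists (n - k); lia.
subst n.
set q := #|F|; set K := m + e + m * a1; set cB := 2 ^ (q ^ (K * k)).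
set t := alpha * k * k + 2 * cB.
rewrite -/q -/K -/cB -/t in hn.
have q1 : 1 < q by apply: card_finNzRing_gt1.
have q0 : 0 < q by apply: ltnW.
have hK : k + delta = K.+1 by rewrite /K hd hk; lia.
set G := grassmannian F (k + n') k; set N := #|G|.
have hN : q ^ (k * n') <= N by apply: card_grass_lb.
set Bad := BadS F (k + n') k delta alpha.
have hB : #|Bad| <= q ^ ((k + n') * K) * cB by apply: card_bad.
have hBad : forall S, S \in Bad -> S \subset G /\ #|S| = alpha.
  by move=> S; rewrite inE => /and3P [? /eqP ? _].
have a0 : 0 < alpha by rewrite ha.
have hne : k + n' <= e * (k + n') by apply: leq_pmull.
have hte : t + alpha <= e * (k + n') by lia.
set s := q ^ (e * (k + n') - t).
have hs : s * q ^ t = q ^ (e * (k + n')) by rewrite -expnD subnK //; lia.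
have has : alpha <= s.
  apply: leq_trans (ltnW (ltn_expl _ q1)); lia.
have hsN : s <= N.
  apply: leq_trans hN; rewrite leq_exp2l //.
  have h1 : e * (k + n') <= k * (k + n') by rewrite leq_mul2r; apply/orP; right; lia.
  have h2 : k * k <= t.
    rewrite /t -mulnA; apply: leq_trans (leq_pmull _ a0) (leq_addr _ _).
  rewrite mulnDr in h1; lia.
have [X [XG indep hX]] := alteration a0 hsN hBad.
have hr := bin_ratio has hsN.
have Cpos : 0 < 'C(N, s) by rewrite bin_gt0.
have h1 : (s - #|X|) * N ^ alpha <= #|Bad| * s ^ alpha.
  rewrite -(leq_pmul2l Cpos).
  apply: leq_trans (_ : #|Bad| * ('C(N - alpha, s - alpha) * N ^ alpha) <= _).
    by rewrite mulnA (mulnA #|Bad|) leq_mul2r hX orbT.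
  apply: leq_trans (_ : #|Bad| * ('C(N, s) * s ^ alpha) <= _).
    by rewrite leq_mul2l hr orbT.
  by rewrite mulnCA.
have key : 2 * #|Bad| * s ^ a1 <= N ^ alpha.
  apply: leq_trans (_ : 2 * (q ^ ((k + n') * K) * cB) * s ^ a1 <= _).
    by rewrite leq_mul2r leq_mul2l hB !orbT.
  apply: leq_trans (_ : (q ^ (k * n')) ^ alpha <= _); last first.
    by rewrite leq_exp2r //.
  have tp : 0 < q ^ (t * a1) by rewrite expn_gt0 q0.
  rewrite -(leq_pmul2r tp).
  have E1 : 2 * (q ^ ((k + n') * K) * cB) * s ^ a1 * q ^ (t * a1) = 2 * cB * q ^ (alpha * k * (k + n')).
    have -> : q ^ (t * a1) = (q ^ t) ^ a1 by rewrite expnM.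
    have E0 : s ^ a1 * (q ^ t) ^ a1 = q ^ (e * (k + n') * a1) by rewrite -expnMn hs -expnM.
    have -> : 2 * (q ^ ((k + n') * K) * cB) * s ^ a1 * (q ^ t) ^ a1 =
      2 * cB * (q ^ ((k + n') * K) * (s ^ a1 * (q ^ t) ^ a1)) by ring.
    rewrite E0 -expnD; congr (_ * q ^ _); rewrite ha hk /K; ring.
  have E2 : (q ^ (k * n')) ^ alpha * q ^ (alpha * k * k) = q ^ (alpha * k * (k + n')).
    rewrite -expnM -expnD; congr (q ^ _).
    ring.
  have E3 : 2 * cB * q ^ (alpha * k * k) <= q ^ (t * a1).
    apply: leq_trans (_ : q ^ t <= _); last by rewrite leq_exp2l // leq_pmulr.
    rewrite /t expnD mulnC leq_mul2l; apply/orP; right.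
    by apply: ltnW; apply: ltn_expl.
  rewrite E1; apply: leq_trans (_ : (q ^ (k * n')) ^ alpha * (2 * cB * q ^ (alpha * k * k)) <= _).
    by rewrite mulnCA E2.
  by rewrite leq_mul2l E3 orbT.
have Npos : 0 < N ^ alpha by rewrite expn_gt0; apply/orP; left; lia.
have h2 : 2 * (s - #|X|) <= s.
  rewrite -(leq_pmul2r Npos).
  apply: leq_trans (_ : 2 * (#|Bad| * s ^ alpha) <= _).
    by rewrite -mulnA leq_mul2l h1 orbT.
  rewrite ha expnS.
  have -> : 2 * (#|Bad| * (s * s ^ a1)) = s * (2 * #|Bad| * s ^ a1) by ring.
  by rewrite leq_mul2l -ha key orbT.
have code : covering_code k delta alpha X.
  apply/andP; split; first exact: XG.
  apply/forallP => S; apply/implyP => /andP [SX /eqP cS].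
  rewrite leqNgt; apply/negP => hdim.
  have SB : S \in Bad by rewrite inE cS eqxx hdim (subset_trans SX XG).
  by have := indep S SB; rewrite SX.
have hXB : #|X| <= Bq F (k + n') k delta alpha by rewrite /Bq; apply: (leq_bigmax_cond X).
rewrite -hs.
have : s <= 2 * #|X| by lia.
move=> hsX; apply: leq_trans (_ : 2 * #|X| * q ^ t <= _).
  by rewrite leq_mul2r hsX orbT.
rewrite mulnAC leq_mul2l hXB orbT //.
Qed.
End Lower2.

Theorem mainTheorem15 (F : finFieldType) (k delta alpha : nat) :
  0 < k -> 0 < delta -> 2 <= alpha -> delta <= (alpha - 1) * k ->
  (alpha - 1) %| (delta - 1) ->
  exists c1 c2 N : nat, 0 < c1 /\ 0 < c2 /\
    forall n : nat, N <= n ->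
      #|F| ^ ((k - (delta - 1) %/ (alpha - 1)) * n) <= c1 * Bq F n k delta alpha /\
      Bq F n k delta alpha <= c2 * #|F| ^ ((k - (delta - 1) %/ (alpha - 1)) * n).
Proof.
move=> k0 d0 a2 dk hdiv.
set a1 := alpha - 1; set m := (delta - 1) %/ a1.
have ha : alpha = a1.+1 by rewrite /a1; lia.
have a1p : 0 < a1 by rewrite /a1; lia.
have hm : delta - 1 = m * a1 by rewrite /m divnK.
have hd : delta = m * a1 + 1 by lia.
have mk : m < k.
  rewrite -(ltn_pmul2r a1p); rewrite -hm mulnC; lia.
set e := k - m.
have hk : k = m + e by rewrite /e; lia.
have ep : 0 < e by rewrite /e; lia.
set t := alpha*k*k + 2 * 2 ^ (#|F| ^ ((m+e+m*a1) * k)).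
exists (2 * #|F| ^ t), a1, (k + t + alpha); split; [|split] => //.
  by rewrite muln_gt0 expn_gt0 (ltnW (card_finNzRing_gt1 F)).
move=> n hn; split.
  exact: (lower_code ha a1p hd hk ep hn).
rewrite /Bq; apply/bigmax_leqP => C hC.
rewrite (mulnC e n); exact: (upper_code ha hd hk hC).
Qed.
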